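(* Let $m\mid n$ be positive integers, $q$ a primitive $m$-th root of unity, $\alpha\in\mathbb{C}$, and fix a primitive $n$-th root of unity $\zeta$ with $\zeta^{n/m}=q$. Let $T=T(n,m,\alpha)$. (i) Suppose $A$ is a central simple algebra which is a $T$-module algebra. Let $A=\bigoplus_{i\in\mathbb{Z}/n\mathbb{Z}}A_i$ be the decomposition into eigenspaces for $g$, where $g$ acts on $A_i$ by $\zeta^i$, and write $|a|=i$ for $a\in A_i$. Then there exists $c\in A_{n/m}$ such that $x\cdot a=ca-\zeta^{|a|}ac$ for every homogeneous $a\in A$, and this $c$ satisfies $c^ma-\zeta^{m|a|}ac^m=\alpha(1-\zeta^{m|a|})a$ for every homogeneous $a\in A$. (ii) Conversely, let $A=\bigoplus_{i\in\mathbb{Z}/n\mathbb{Z}}A_i$ be a $\mathbb{Z}/n\mathbb{Z}$-graded central simple division algebra and let $c\in A_{n/m}$ satisfy $c^ma-\zeta^{m|a|}ac^m=\alpha(1-\zeta^{m|a|})a$ for each homogeneous $a\in A$. Then there is a unique action of $T$ on $A$ with $g\cdot a=\zeta^{|a|}a$ and $x\cdot a=ca-\zeta^{|a|}ac$ for homogeneous $a$, and this action makes $A$ a $T$-module algebra.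
   Context: For positive integers $m\mid n$, a primitive $m$-th root of unity $q$, and $\alpha\in\mathbb{C}$, the generalized Taft algebra is the Hopf algebra $T(n,m,\alpha)=\mathbb{C}\langle x,g\rangle/(x^m-\alpha(1-g^m),\ g^n-1,\ gxg^{-1}-qx)$ with $g$ grouplike and $\Delta(x)=x\otimes 1+g\otimes x$. A central simple algebra is a simple algebra finite-dimensional over its center. A $T$-module algebra is an algebra $A$ with a $T$-module structure satisfying $h\cdot(ab)=(h_1\cdot a)(h_2\cdot b)$, $h\cdot 1=\epsilon(h)1$; in particular $g$ acts by an algebra automorphism, so the eigenspace decomposition is an algebra grading. *)

(* Defs.v *)
From mathcomp Require Import all_boot all_algebra complex.
From mathcomp Require Import reals.
Set Implicit Arguments. Unset Strict Implicit. Unset Printing Implicit Defensive.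
Import GRing.Theory.
Local Open Scope ring_scope.

Section Defs.
Variables (K : fieldType) (A : algType K).

Definition central (z : A) : Prop := forall b : A, z * b = b * z.

Definition two_sided_ideal (I : A -> Prop) : Prop :=
  [/\ I 0, (forall a b, I a -> I b -> I (a + b)),
      (forall r a, I a -> I (r * a)) & (forall r a, I a -> I (a * r))].

Definition simple_alg : Prop :=
  (1 : A) != 0 /\
  forall I : A -> Prop, two_sided_ideal I ->
    (forall a, I a -> a = 0) \/ (forall a, I a).

(* finite-dimensional over its center: finitely generated as a module over
   the center (the center is a field since A is simple) *)
Definition findim_over_center : Prop :=
  exists s : seq A, forall a : A,
    exists zs : seq A, [/\ size zs = size s, (forall z, z \in zs -> central z)
      & a = \sum_(i < size s) zs`_i * s`_i].

Definition central_simple : Prop := simple_alg /\ findim_over_center.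

Definition division_alg : Prop :=
  forall a : A, a != 0 -> exists b : A, a * b = 1 /\ b * a = 1.

(* A T(n,m,alpha)-module structure on A: since T = K<x,g>/(x^m - alpha(1-g^m),
   g^n - 1, g x g^-1 - q x), a T-module structure is exactly a pair of linear
   maps G (action of g) and X (action of x) satisfying the defining relations. *)
Definition Taft_module (n m : nat) (q alpha : K) (G X : A -> A) : Prop :=
  [/\ (forall (k : K) (a b : A), G (k *: a + b) = k *: G a + G b),
      (forall (k : K) (a b : A), X (k *: a + b) = k *: X a + X b),
      (forall a, iter m X a = alpha *: (a - iter m G a)),
      (forall a, iter n G a = a)
    & (forall a, G (X a) = q *: X (G a))].

(* The module-algebra axioms h.(ab) = (h1.a)(h2.b), h.1 = eps(h) 1, checked on
   the algebra generators g (grouplike: Delta g = g (x) g, eps g = 1) and x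
   (Delta x = x (x) 1 + g (x) x, eps x = 0) of T; they then hold for all h. *)
Definition Taft_module_algebra (n m : nat) (q alpha : K) (G X : A -> A) : Prop :=
  [/\ Taft_module n m q alpha G X,
      (forall a b, G (a * b) = G a * G b), G 1 = 1,
      (forall a b, X (a * b) = X a * b + G a * X b) & X 1 = 0].

(* A Z/nZ-grading of A: Ai i is the degree-(i mod n) component, for i : nat. *)
Definition Zn_grading (n : nat) (Ai : nat -> A -> Prop) : Prop :=
  [/\ (forall i, Ai i 0 /\ (forall (k : K) a b, Ai i a -> Ai i b -> Ai i (k *: a + b))),
      (forall i a, Ai i a <-> Ai (i %% n)%N a),
      (forall a, exists f : 'I_n -> A, (forall i : 'I_n, Ai i (f i)) /\ a = \sum_i f i),
      (forall f : 'I_n -> A, (forall i : 'I_n, Ai i (f i)) -> \sum_i f i = 0 ->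
          forall i : 'I_n, f i = 0)
    & (forall i j a b, Ai i a -> Ai j b -> Ai (i + j)%N (a * b))].

End Defs.

(* Main.v *)
From HB Require Import structures.
Require Import Defs.
From mathcomp Require Import all_boot all_algebra complex.
From mathcomp Require Import reals ring.
From mathcomp Require Import boolp.
Import GRing.Theory Num.Theory.
Local Open Scope ring_scope.
Set Implicit Arguments. Unset Strict Implicit. Unset Printing Implicit Defensive.

Section CenterField.
Variables (K : fieldType) (A : algType K).
Hypothesis Hs : simple_alg A.

Lemma central_inv (z : A) : central z -> z != 0 -> exists w, central w /\ w * z = 1 /\ z * w = 1.
Proof.
move=> cz nz; case: Hs => _ /(_ (fun a => exists r, a = r * z)) [].
- split; first by exists 0; rewrite mul0r.
  + by move=> a b [r ->] [s ->]; exists (r + s); rewrite mulrDl.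
  + by move=> r a [s ->]; exists (r * s); rewrite mulrA.
  + by move=> r a [s ->]; exists (s * r); rewrite -mulrA cz mulrA.
- by move=> /(_ z (ex_intro _ 1 (esym (mul1r z)))) /eqP; rewrite (negbTE nz).
- case/(_ 1) => w Hw; exists w.
  have wz : w * z = 1 by [].
  have zw : z * w = 1 by rewrite cz.
  split=> //; move=> b.
  have -> : w * b = w * b * (z * w) by rewrite zw mulr1.
  by rewrite mulrA -(mulrA w b z) -(cz b) mulrA wz mul1r.
Qed.

Definition centb (x : A) : bool := `[< central x >].
Lemma centbP x : reflect (central x) (centb x). Proof. exact: asboolP. Qed.

Record ZTr (H : simple_alg A) := MkZT { zval :> A; zvalP : centb zval }.
Local Notation ZT := (ZTr Hs).
HB.instance Definition _ := [isSub for @zval Hs].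
HB.instance Definition _ := [Choice of ZT by <:].

Lemma cent0 : centb 0. Proof. by apply/centbP=> b; rewrite mul0r mulr0. Qed.
Lemma cent1 : centb 1. Proof. by apply/centbP=> b; rewrite mul1r mulr1. Qed.
Lemma centD x y : centb x -> centb y -> centb (x + y).
Proof. by move=> /centbP cx /centbP cy; apply/centbP=> b; rewrite mulrDl mulrDr cx cy. Qed.
Lemma centN x : centb x -> centb (- x).
Proof. by move=> /centbP cx; apply/centbP=> b; rewrite mulNr mulrN cx. Qed.
Lemma centM x y : centb x -> centb y -> centb (x * y).
Proof. by move=> /centbP cx /centbP cy; apply/centbP=> b; rewrite -mulrA cy mulrA cx mulrA. Qed.

Definition zzero := @MkZT Hs _ cent0.
Definition zone := @MkZT Hs _ cent1.
Definition zadd (a b : ZT) := @MkZT Hs _ (centD (zvalP a) (zvalP b)).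
Definition zopp (a : ZT) := @MkZT Hs _ (centN (zvalP a)).
Definition zmul (a b : ZT) := @MkZT Hs _ (centM (zvalP a) (zvalP b)).

Lemma zaddA : associative zadd. Proof. by move=> a b c; apply: val_inj; rewrite /= addrA. Qed.
Lemma zaddC : commutative zadd. Proof. by move=> a b; apply: val_inj; rewrite /= addrC. Qed.
Lemma zadd0 : left_id zzero zadd. Proof. by move=> a; apply: val_inj; rewrite /= add0r. Qed.
Lemma zaddN : left_inverse zzero zopp zadd. Proof. by move=> a; apply: val_inj; rewrite /= addNr. Qed.
HB.instance Definition _ := GRing.isZmodule.Build ZT zaddA zaddC zadd0 zaddN.

Lemma zmulA : associative zmul. Proof. by move=> a b c; apply: val_inj; rewrite /= mulrA. Qed.
Lemma zmulC : commutative zmul.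
Proof. by move=> [a Pa] b; apply: val_inj; exact: (elimT (centbP a) Pa). Qed.
Lemma zmul1 : left_id zone zmul. Proof. by move=> a; apply: val_inj; rewrite /= mul1r. Qed.
Lemma zmulDl : left_distributive zmul zadd. Proof. by move=> a b c; apply: val_inj; rewrite /= mulrDl. Qed.
Lemma zone_neq0 : zone != zzero.
Proof. by apply/eqP=> /(congr1 val) /= /eqP; case: Hs => /negbTE ->. Qed.
HB.instance Definition _ := GRing.Zmodule_isComNzRing.Build ZT zmulA zmulC zmul1 zmulDl zone_neq0.

Lemma zvalD (a b : ZT) : zval (a + b) = zval a + zval b. Proof. by []. Qed.
Lemma zvalM (a b : ZT) : zval (a * b) = zval a * zval b. Proof. by []. Qed.
Lemma zval0 : zval (0 : ZT) = 0. Proof. by []. Qed.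
Lemma zval1 : zval (1 : ZT) = 1. Proof. by []. Qed.
Lemma zvalN (a : ZT) : zval (- a) = - zval a. Proof. by []. Qed.

Definition zinv_def (a : ZT) : A :=
  if pselect (exists w, central w /\ w * zval a = 1) is left P
  then proj1_sig (cid P) else 0.
Lemma zinv_cent a : centb (zinv_def a).
Proof.
rewrite /zinv_def; case: pselect => [P|_]; last exact: cent0.
by case: (cid P) => w [cw _] /=; apply/centbP.
Qed.
Definition zinv a := @MkZT Hs _ (zinv_cent a).
Lemma zmulVf (a : ZT) : a != 0 -> zinv a * a = 1.
Proof.
move=> na; apply: val_inj; rewrite /= /zinv_def; case: pselect => [P|NP].
  by case: (cid P) => w [cw wa].
exfalso; apply: NP; case: (central_inv (z := zval a)).
- by apply/centbP; exact: zvalP.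
- by apply: contra na => /eqP h; apply/eqP/val_inj.
by move=> w [cw [wa _]]; exists w.
Qed.
Lemma zinv0 : zinv 0 = 0.
Proof.
apply: val_inj; rewrite /= /zinv_def; case: pselect => [P|//].
case: (cid P) => w [_ /=]; rewrite mulr0 => /eqP; case: Hs => /negbTE; rewrite eq_sym => ->.
by [].
Qed.
HB.instance Definition _ := GRing.ComNzRing_isField.Build ZT zmulVf zinv0.

Lemma zvalV (a : ZT) : a != 0 -> zval a^-1 * zval a = 1.
Proof. by move=> na; rewrite -zvalM mulVf. Qed.

Lemma zval_nat k : zval (k%:R : ZT) = k%:R.
Proof. by elim: k => // k IH; rewrite !mulrS zvalD IH. Qed.

Lemma zcentral (a : ZT) : central (zval a).
Proof. by apply/centbP; exact: zvalP. Qed.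

Lemma zval_sum I (r : seq I) (P : pred I) (F : I -> ZT) :
  zval (\sum_(i <- r | P i) F i) = \sum_(i <- r | P i) zval (F i).
Proof. by apply: (big_ind2 (fun x y => zval x = y)) => // x1 x2 y1 y2 <- <-. Qed.

End CenterField.

Section Basis.
Variables (K : numFieldType) (A : algType K).
Hypothesis Hs : simple_alg A.
Local Notation Z := (ZTr Hs).

Lemma zC (z : Z) (x : A) : zval z * x = x * zval z.
Proof. exact: zcentral. Qed.
Lemma zCA (z : Z) (x y : A) : x * (zval z * y) = zval z * (x * y).
Proof. by rewrite mulrA -zC mulrA. Qed.

Variables (d : nat) (b : 'I_d -> A).
Hypothesis bspan : forall a, exists y : 'I_d -> Z, a = \sum_i zval (y i) * b i.
Hypothesis bind : forall y : 'I_d -> Z, \sum_i zval (y i) * b i = 0 -> forall i, y i = 0.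

Definition coord (a : A) : 'I_d -> Z := proj1_sig (cid (bspan a)).
Lemma coordE a : a = \sum_i zval (coord a i) * b i.
Proof. by rewrite /coord; case: (cid _). Qed.

Lemma coord_uniq a y : a = \sum_i zval (y i) * b i -> forall i, coord a i = y i.
Proof.
move=> ha i; apply/eqP; rewrite -subr_eq0; apply/eqP; move: i; apply: bind.
under eq_bigr do rewrite zvalD zvalN mulrDl mulNr.
by rewrite big_split /= sumrN -ha -coordE subrr.
Qed.

Lemma coord_sum (J : finType) (y : J -> Z) (u : J -> A) i :
  coord (\sum_j zval (y j) * u j) i = \sum_j y j * coord (u j) i.
Proof.
move: i; apply: coord_uniq; symmetry.
under eq_bigr => j _ do rewrite zval_sum mulr_suml.
rewrite exchange_big /=; apply: eq_bigr => j _.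
transitivity (zval (y j) * \sum_l zval (coord (u j) l) * b l); last by rewrite -coordE.
rewrite mulr_sumr; apply: eq_bigr => l _.
by rewrite ?zvalM mulrA.
Qed.

Lemma coordD x y i : coord (x + y) i = coord x i + coord y i.
Proof.
move: i; apply: coord_uniq.
under eq_bigr do rewrite zvalD mulrDl.
by rewrite big_split /= -!coordE.
Qed.

Lemma coordZ z x i : coord (zval z * x) i = z * coord x i.
Proof.
move: i; apply: coord_uniq.
under eq_bigr do rewrite zvalM -mulrA.
by rewrite -mulr_sumr -coordE.
Qed.

Lemma coord_b l i : coord (b l) i = if l == i then 1 else 0.
Proof.
move: i; apply: coord_uniq.
rewrite (bigD1 l) //= eqxx zval1 mul1r big1 ?addr0 // => i /negbTE.
by rewrite eq_sym => ->; rewrite zval0 mul0r.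
Qed.

Definition lam (x : A) : Z := \sum_j coord (x * b j) j.

Lemma lamD x y : lam (x + y) = lam x + lam y.
Proof. by rewrite /lam -big_split; apply: eq_bigr => j _; rewrite mulrDl coordD. Qed.
Lemma lam0 : lam 0 = 0.
Proof. by apply/eqP; rewrite -[lam 0](addrK (lam 0)) -lamD addr0 subrr. Qed.
Lemma lamN x : lam (- x) = - lam x.
Proof. by apply/eqP; rewrite -subr_eq0 opprK -lamD addNr lam0. Qed.
Lemma lamZ z x : lam (zval z * x) = z * lam x.
Proof. by rewrite /lam mulr_sumr; apply: eq_bigr => j _; rewrite -mulrA coordZ. Qed.
Lemma lam_sumZ (J : finType) (y : J -> Z) (u : J -> A) :
  lam (\sum_j zval (y j) * u j) = \sum_j y j * lam (u j).
Proof.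
rewrite (big_morph lam lamD lam0); apply: eq_bigr => j _; exact: lamZ.
Qed.

Lemma lam_mulE x y : lam (x * y) =
  \sum_j \sum_l coord (y * b j) l * coord (x * b l) j.
Proof.
rewrite /lam; apply: eq_bigr => j _.
rewrite -mulrA {1}[y * b j]coordE mulr_sumr.
under eq_bigr do rewrite zCA.
by rewrite coord_sum.
Qed.

Lemma lam_comm x y : lam (x * y) = lam (y * x).
Proof.
rewrite !lam_mulE exchange_big /=; apply: eq_bigr => j _.
by apply: eq_bigr => l _; rewrite mulrC.
Qed.

Lemma lam1 : lam 1 = d%:R.
Proof.
rewrite /lam (eq_bigr (fun _ => 1)) ?sumr_const ?card_ord //.
by move=> j _; rewrite mul1r coord_b eqxx.
Qed.

Lemma d_neq0 : (d%:R : Z) != 0.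
Proof.
apply/negP => /eqP h.
have : (d%:R : A) = 0 by rewrite -zval_nat h.
have -> : (d%:R : A) = (d%:R : K) *: (1 : A) by rewrite scaler_nat.
move/eqP; rewrite scaler_eq0 pnatr_eq0; case: Hs => /negbTE -> _.
rewrite orbF => /eqP d0.
case: Hs => /negP H1 _; apply: H1; apply/eqP; rewrite [1]coordE.
by rewrite big1 // => -[i hi]; exfalso; rewrite d0 in hi.
Qed.

Lemma lam_nondeg x : (forall y, lam (x * y) = 0) -> x = 0.
Proof.
move=> hx; case: Hs => _ /(_ (fun x => forall y, lam (x * y) = 0)) [].
- split.
  + by move=> y; rewrite mul0r lam0.
  + by move=> u v hu hv y; rewrite mulrDl lamD hu hv addr0.
  + by move=> r u hu y; rewrite -mulrA lam_comm -mulrA hu.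
  + by move=> r u hu y; rewrite -mulrA hu.
- by move=> /(_ x hx).
- move=> /(_ 1) h; exfalso; move: (h 1); rewrite mulr1 lam1; apply/eqP; exact: d_neq0.
Qed.

Definition Mx : 'M[Z]_d := \matrix_(i, j) lam (b i * b j).

Lemma Mx_unit : Mx \in unitmx.
Proof.
rewrite -row_free_unit; apply: inj_row_free => v hv.
pose x := \sum_i zval (v ord0 i) * b i.
have hx : forall j, lam (x * b j) = 0.
  move=> j; have := congr1 (fun M : 'M[Z]_(1, d) => M ord0 j) hv; rewrite !mxE => <-.
  rewrite mulr_suml; under eq_bigr do rewrite -mulrA.
  by rewrite lam_sumZ; apply: eq_bigr => i _; rewrite mxE.
have x0 : x = 0.
  apply: lam_nondeg => y; rewrite [y]coordE mulr_sumr.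
  under eq_bigr do rewrite zCA.
  by rewrite lam_sumZ big1 // => i _; rewrite hx mulr0.
apply/matrixP => i j; rewrite mxE (ord1 i); exact: bind x0 j.
Qed.

Definition bd (j : 'I_d) : A := \sum_k zval (invmx Mx k j) * b k.

Lemma lam_b_bd i j : lam (b i * bd j) = if i == j then 1 else 0.
Proof.
rewrite /bd mulr_sumr; under eq_bigr do rewrite zCA.
rewrite lam_sumZ.
have -> : (if i == j then 1 else 0) = (1%:M : 'M[Z]_d) i j by rewrite mxE; case: (i == j).
by rewrite -(mulmxV Mx_unit) mxE; apply: eq_bigr => k _; rewrite mxE mulrC.
Qed.

Lemma coord_dual x i : coord x i = lam (x * bd i).
Proof.
rewrite {2}[x]coordE mulr_suml; under eq_bigr do rewrite -mulrA.
rewrite lam_sumZ (bigD1 i) //= lam_b_bd eqxx mulr1 big1 ?addr0 //.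
by move=> l /negbTE hl; rewrite lam_b_bd hl mulr0.
Qed.

Lemma lam_b_sum l (t : 'I_d -> Z) :
  lam (b l * \sum_i zval (t i) * bd i) = t l.
Proof.
rewrite mulr_sumr; under eq_bigr do rewrite zCA.
rewrite lam_sumZ (bigD1 l) //= lam_b_bd eqxx mulr1 big1 ?addr0 //.
by move=> i; rewrite eq_sym => /negbTE hl; rewrite lam_b_bd hl mulr0.
Qed.

Lemma dual_exp y : y = \sum_i zval (lam (b i * y)) * bd i.
Proof.
apply/eqP; rewrite -subr_eq0; apply/eqP; apply: lam_nondeg => x.
rewrite lam_comm [x]coordE mulr_suml.
under eq_bigr do rewrite -mulrA.
rewrite lam_sumZ big1 // => l _.
by rewrite mulrBr lamD lamN lam_b_sum subrr mulr0.
Qed.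


Lemma ab_exp a i : a * b i = \sum_j zval (lam (b i * (bd j * a))) * b j.
Proof.
rewrite {1}[a * b i]coordE; apply: eq_bigr => j _.
by rewrite coord_dual -mulrA lam_comm -mulrA.
Qed.

Definition z0 := \sum_i b i * bd i.

Lemma z0_central : central z0.
Proof.
move=> a; symmetry; rewrite /z0 mulr_sumr mulr_suml.
transitivity (\sum_i \sum_j zval (lam (b i * (bd j * a))) * (b j * bd i)).
  apply: eq_bigr => i _; rewrite mulrA ab_exp mulr_suml.
  by apply: eq_bigr => j _; rewrite -mulrA.
rewrite exchange_big /=; apply: eq_bigr => j _.
rewrite -mulrA [X in _ = b j * X]dual_exp mulr_sumr.
by apply: eq_bigr => i _; rewrite zCA.
Qed.

Lemma lam_z0 : lam z0 = d%:R.
Proof.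
rewrite /z0 (big_morph lam lamD lam0) (eq_bigr (fun _ => 1)) ?sumr_const ?card_ord //.
by move=> i _; rewrite lam_b_bd eqxx.
Qed.

Lemma z0_neq0 : z0 != 0.
Proof. by apply/eqP => h; move: d_neq0; rewrite -lam_z0 h lam0 eqxx. Qed.

Lemma inner_twisted (G X : A -> A) :
  (forall x y, X (x + y) = X x + X y) ->
  (forall (z : Z) x, X (zval z * x) = zval z * X x) ->
  (forall x y, X (x * y) = X x * y + G x * X y) ->
  exists c, forall a, X a = c * a - G a * c.
Proof.
move=> XD XZ XM.
have X0 : X 0 = 0 by apply/eqP; rewrite -[X 0](addrK (X 0)) -XD addr0 subrr.
pose c1 := \sum_j X (b j) * bd j.
have key : forall a, c1 * a = X a * z0 + G a * c1.
  move=> a; rewrite /c1 mulr_suml.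
  transitivity (\sum_i X (a * b i) * bd i).
    transitivity (\sum_j \sum_i zval (lam (b i * (bd j * a))) * (X (b j) * bd i)).
      apply: eq_bigr => j _; rewrite -mulrA [Y in X (b j) * Y = _]dual_exp mulr_sumr.
      by apply: eq_bigr => i _; rewrite zCA.
    rewrite exchange_big /=; apply: eq_bigr => i _.
    rewrite ab_exp (big_morph X XD X0) mulr_suml; apply: eq_bigr => j _.
    by rewrite XZ -mulrA.
  rewrite /z0 mulr_sumr mulr_sumr -big_split /=; apply: eq_bigr => i _.
  by rewrite XM mulrDl !mulrA.
have z0c : centb z0 by apply/centbP; exact: z0_central.
pose Z0 : Z := @MkZT _ _ Hs _ z0c.
have Z0n : Z0 != 0 by apply: contra z0_neq0 => /eqP/(congr1 (@zval _ _ Hs)) /= ->.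
pose w := zval (Z0^-1).
have wz : z0 * w = 1 by rewrite /w -zC; exact: (zvalV Z0n).
exists (c1 * w) => a.
have wa : w * a = a * w by rewrite /w -zC.
by rewrite -[c1 * w * a]mulrA wa mulrA key [G a * (c1 * w)]mulrA -mulrBl addrK -mulrA wz mulr1.
Qed.

End Basis.

Section BasisEx.
Variables (K : numFieldType) (A : algType K).
Hypothesis Hs : simple_alg A.
Local Notation Z := (ZTr Hs).

Definition spans N (s : 'I_N -> A) :=
  forall a, exists y : 'I_N -> Z, a = \sum_i zval (y i) * s i.
Definition indep N (s : 'I_N -> A) :=
  forall y : 'I_N -> Z, \sum_i zval (y i) * s i = 0 -> forall i, y i = 0.

Lemma basis_from_span N (s : 'I_N -> A) : spans s ->
  exists d (b : 'I_d -> A), spans b /\ indep b.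
Proof.
elim: N s => [|N IH] s hs.
  by exists 0%N, s; split => // y _ [].
case: (pselect (indep s)) => [hi|hni]; first by exists N.+1, s.
have [y [hy0 [j hj]]] : exists y : 'I_N.+1 -> Z,
    \sum_i zval (y i) * s i = 0 /\ exists j, y j != 0.
  apply: contrapT => hne; apply: hni => y hy i.
  apply/eqP; apply: contrapT => hyi; apply: hne; exists y; split=> //.
  by exists i; apply/negP.
apply: (IH (fun k => s (lift j k))) => a.
have [x ha] := hs a.
exists (fun k => x (lift j k) - x j * (y j)^-1 * y (lift j k)).
move: hy0; rewrite (bigD1_ord j) //= => /eqP; rewrite addr_eq0 => /eqP hy0.
rewrite ha (bigD1_ord j) //=.
have -> : zval (x j) * s j = zval (x j * (y j)^-1) * (zval (y j) * s j).
  by rewrite mulrA -zvalM -mulrA mulVf // mulr1.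
rewrite hy0 mulrN mulr_sumr -sumrN -big_split /=; apply: eq_bigr => k _.
by rewrite mulrBl addrC mulrA.
Qed.

End BasisEx.

Lemma twisted_inner (K : numFieldType) (A : algType K) (G X : A -> A) :
  central_simple A ->
  (forall x y, X (x + y) = X x + X y) ->
  (forall z x, central z -> X (z * x) = z * X x) ->
  (forall x y, X (x * y) = X x * y + G x * X y) ->
  exists c, forall a, X a = c * a - G a * c.
Proof.
move=> [Hs [s hs]] XD XZ XM.
have sp : spans Hs (fun i : 'I_(size s) => s`_i).
  move=> a; have [zs [hsz hc ->]] := hs a.
  exists (fun i => insubd (0 : ZTr Hs) zs`_i); apply: eq_bigr => i _.
  rewrite insubdK //; apply/centbP; apply: hc; apply: mem_nth.
  by rewrite hsz.
have [d [b [hsp hind]]] := basis_from_span sp.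
apply: (@inner_twisted K A Hs d b hsp hind) => // z x.
by apply: XZ; exact: zcentral.
Qed.

Section XPow.
Variables (K : fieldType) (A : algType K) (X : A -> A) (c a : A) (t q : K).
Hypothesis XL : forall (k : K) u v, X (k *: u + v) = k *: X u + X v.
Hypothesis XH : forall k j, (j <= k)%N ->
  X (c ^+ j * a * c ^+ (k - j)) =
  c * (c ^+ j * a * c ^+ (k - j)) - (t * q ^+ k) *: (c ^+ j * a * c ^+ (k - j) * c).

Lemma XD u v : X (u + v) = X u + X v.
Proof. by have := XL 1 u v; rewrite !scale1r. Qed.
Lemma X0 : X 0 = 0.
Proof. by apply/eqP; rewrite -[X 0](addrK (X 0)) -XD addr0 subrr. Qed.
Lemma XZ k u : X (k *: u) = k *: X u.
Proof. by rewrite -[k *: u]addr0 XL X0 addr0. Qed.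

Definition Sk k (p : {poly K}) :=
  \sum_(j < k.+1) (p`_j * t ^+ (k - j)) *: (c ^+ j * a * c ^+ (k - j)).

Lemma X_Sk k (p : {poly K}) : X (Sk k p) = c * Sk k p - (t * q ^+ k) *: (Sk k p * c).
Proof.
rewrite /Sk (big_morph X XD X0).
rewrite mulr_sumr mulr_suml scaler_sumr -sumrB.
apply: eq_bigr => j _.
rewrite XZ XH; last by rewrite -ltnS.
rewrite scalerBr -scalerAr -scalerAl !scalerA.
by rewrite [_ * (t * _)]mulrC.
Qed.

Lemma Sk_step k (p : {poly K}) : (size p <= k.+1)%N ->
  c * Sk k p - (t * q ^+ k) *: (Sk k p * c) = Sk k.+1 (p * ('X - (q ^+ k)%:P)).
Proof.
move=> sp; rewrite /Sk.
under [in RHS]eq_bigr do rewrite mulrBr coefB coefMX coefMC mulrBl scalerBl.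
rewrite sumrB; apply: (congr2 (fun u v => u - v)).
  rewrite [in RHS]big_ord_recl /= mul0r scale0r add0r mulr_sumr; apply: eq_bigr => j _.
  by rewrite /bump /= add0n add1n subSS -scalerAr !mulrA -exprS.
rewrite [in RHS]big_ord_recr /= (nth_default 0 sp) !mul0r scale0r addr0.
rewrite mulr_suml scaler_sumr; apply: eq_bigr => j _.
have jk : (j <= k)%N by rewrite -ltnS.
rewrite (subSn jk) exprS exprSr -scalerAl scalerA mulrA.
have -> : p`_j * q ^+ k * (t * t ^+ (k - j)) = t * q ^+ k * (p`_j * t ^+ (k - j)).
  by ring.
by [].
Qed.

Definition Pk k : {poly K} := \prod_(0 <= l < k) ('X - (q ^+ l)%:P).

Lemma size_Pk k : (size (Pk k) <= k.+1)%N.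
Proof.
elim: k => [|k IH]; first by rewrite /Pk big_geq // size_poly1.
rewrite /Pk big_nat_recr //= -/(Pk k).
apply: leq_trans (size_polyMleq _ _) _; rewrite size_XsubC addn2 /=.
by [].
Qed.

Lemma iterX k : iter k X a = Sk k (Pk k).
Proof.
elim: k => [|k IH].
  rewrite /Sk /Pk big_geq // big_ord1 /= coef1 /= mul1r !expr0 scale1r.
  by rewrite mul1r mulr1.
rewrite iterS IH X_Sk Sk_step ?size_Pk //.
by rewrite /Pk big_nat_recr.
Qed.

Lemma iterX_prim m : (0 < m)%N -> m.-primitive_root q ->
  iter m X a = c ^+ m * a - t ^+ m *: (a * c ^+ m).
Proof.
move=> m0 qp; rewrite iterX /Pk (factor_Xn_sub_1 qp) /Sk.
under eq_bigr do rewrite coefB coefXn coef1 mulrBl scalerBl.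
rewrite sumrB; congr (_ - _).
  rewrite big_ord_recr /= eqxx mul1r subnn expr0 scale1r mulr1 big1 ?add0r //.
  by move=> j _; rewrite /= ltn_eqF ?mul0r ?scale0r.
by rewrite big_ord_recl /= mul1r subn0 expr0 mul1r big1 ?addr0 // => j _; rewrite mul0r scale0r.
Qed.

End XPow.

Lemma simple_linv (K : fieldType) (A : algType K) (F : A -> A) (w : A) :
  simple_alg A -> w != 0 -> (forall s, w * s = F s * w) -> exists v, v * w = 1.
Proof.
move=> [_ Hs] nw hF; case: (Hs (fun a => exists r, a = r * w)).
- split; first by exists 0; rewrite mul0r.
  + by move=> a b [r ->] [s ->]; exists (r + s); rewrite mulrDl.
  + by move=> r a [s ->]; exists (r * s); rewrite mulrA.
  + by move=> r a [s ->]; exists (s * F r); rewrite -mulrA hF mulrA.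
- by move=> /(_ w (ex_intro _ 1 (esym (mul1r w)))) /eqP; rewrite (negbTE nw).
- by case/(_ 1) => v hv; exists v.
Qed.

Lemma simple_rinv (K : fieldType) (A : algType K) (F : A -> A) (w : A) :
  simple_alg A -> w != 0 -> (forall s, s * w = w * F s) -> exists u, w * u = 1.
Proof.
move=> [_ Hs] nw hF; case: (Hs (fun a => exists r, a = w * r)).
- split; first by exists 0; rewrite mulr0.
  + by move=> a b [r ->] [s ->]; exists (r + s); rewrite mulrDr.
  + by move=> r a [s ->]; exists (F r * s); rewrite mulrA hF mulrA.
  + by move=> r a [s ->]; exists (s * r); rewrite mulrA.
- by move=> /(_ w (ex_intro _ 1 (esym (mulr1 w)))) /eqP; rewrite (negbTE nw).
- by case/(_ 1) => u hu; exists u.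
Qed.

Section PartI.
Variables (K : numFieldType) (A : algType K) (n m : nat) (q zeta alpha : K) (G X : A -> A).
Hypotheses (m_gt0 : (0 < m)%N) (qp : m.-primitive_root q) (zp : n.-primitive_root zeta)
  (zq : zeta ^+ (n %/ m) = q).
Hypothesis HT : Taft_module_algebra n m q alpha G X.
Hypothesis Hcs : central_simple A.

Let Hs : simple_alg A := Hcs.1.
Let GL : forall (k : K) u v, G (k *: u + v) = k *: G u + G v. Proof. by case: HT => [[]]. Qed.
Let XL : forall (k : K) u v, X (k *: u + v) = k *: X u + X v. Proof. by case: HT => [[]]. Qed.
Let Xm : forall a, iter m X a = alpha *: (a - iter m G a). Proof. by case: HT => [[]]. Qed.
Let Gn : forall a, iter n G a = a. Proof. by case: HT => [[]]. Qed.
Let GX : forall a, G (X a) = q *: X (G a). Proof. by case: HT => [[]]. Qed.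
Let GM : forall a b, G (a * b) = G a * G b. Proof. by case: HT. Qed.
Let G1 : G 1 = 1. Proof. by case: HT. Qed.
Let XM : forall a b, X (a * b) = X a * b + G a * X b. Proof. by case: HT. Qed.

Let GD := XD GL.
Let G0 := X0 GL.
Let GZ := XZ GL.
Let XD' := XD XL.
Let X0' := X0 XL.
Let XZ' := XZ XL.

Lemma GB a b : G (a - b) = G a - G b.
Proof. by rewrite -scaleN1r GD GZ scaleN1r. Qed.
Lemma XB a b : X (a - b) = X a - X b.
Proof. by rewrite -scaleN1r XD' XZ' scaleN1r. Qed.

Definition Gi := iter n.-1 G.
Lemma GGi y : G (Gi y) = y.
Proof. by rewrite /Gi -iterS prednK ?Gn // (prim_order_gt0 zp). Qed.

Lemma Gexp x j : G (x ^+ j) = G x ^+ j.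
Proof. by elim: j => [|j IH]; rewrite ?expr0 ?G1 // !exprS GM IH. Qed.

Lemma Gcent z : central z -> central (G z).
Proof. by move=> cz y; rewrite -[y]GGi -!GM cz. Qed.

Lemma q1_m1 : q = 1 -> m = 1%N.
Proof.
move=> q1; have := prim_order_dvd qp 1; rewrite q1 expr1 eqxx dvdn1.
by move/eqP.
Qed.

Lemma rearr (V : zmodType) (a b c d : V) : a + b = c + d -> c - b = a - d.
Proof. by move=> h; apply/eqP; rewrite subr_eq addrAC h addrK. Qed.

Lemma exists_c0 : exists c0, forall a, X a = c0 * a - G a * c0.
Proof.
case: (pselect (exists z, central z /\ G z != z)) => [[z [cz nz]]|nex].
  have [w [cw [wz zw]]] : exists w, central w /\ w * (z - G z) = 1 /\ (z - G z) * w = 1.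
    apply: (central_inv Hs); last by rewrite subr_eq0 eq_sym.
    by move=> y; rewrite mulrBl mulrBr cz (Gcent cz).
  exists (X z * w) => b.
  have e : X b * (z - G z) = X z * b - G b * X z.
    have e0 : X z * b + G z * X b = X b * z + G b * X z by rewrite -!XM cz.
    by rewrite mulrBr -(Gcent cz (X b)); apply: rearr.
  rewrite -[X b]mulr1 -zw [X b * _]mulrA e mulrBl -[X z * b * w]mulrA -(cw b) !mulrA.
  by [].
have Gz : forall z, central z -> G z = z.
  move=> z cz; apply/eqP; apply: contrapT => hz; apply: nex; exists z; split=> //.
  exact/negP.
case: (eqVneq q 1) => [q1|qn1].
  exists (alpha *: 1) => a.
  have := Xm a; rewrite (q1_m1 q1) /= => ->.
  by rewrite -scalerAl mul1r -scalerAr mulr1 scalerBr.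
have XZc : forall z x, central z -> X (z * x) = z * X x.
  move=> z x cz.
  have hw : forall s, X z * s = G s * X z.
    move=> s; have e0 : X z * s + X s * z = X s * z + G s * X z.
      have h1 := XM z s; have h2 := XM s z.
      rewrite (cz s) h2 (Gz z cz) -(cz (X s)) in h1.
      by rewrite -(cz (X s)) -h1.
    by apply: (addrI (X s * z)); rewrite -e0 addrC.
  have Xz0 : X z = 0.
    apply/eqP; apply: contrapT => /negP nw.
    have [v hv] := simple_linv Hs nw hw.
    have Gw : G (X z) = q *: X z by rewrite GX Gz.
    have ww : X z * X z = 0.
      have := hw (X z); rewrite Gw -scalerAl => /eqP; rewrite -subr_eq0.
      rewrite -{1}[X z * X z]scale1r -scalerBl scaler_eq0 subr_eq0 eq_sym (negbTE qn1).
      by move/eqP.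
    by move: nw; rewrite -[X z]mul1r -hv -mulrA ww mulr0 eqxx.
  by rewrite XM Xz0 mul0r add0r Gz.
exact: (twisted_inner Hcs XD' XZc XM).
Qed.


Lemma sub4 (V : zmodType) (x y z w : V) : (x - y) - (z - w) = (x - z) - (y - w).
Proof. by rewrite !opprB (addrACA x (-y) w (-z)) (addrACA x (-z) w (-y)) (addrC (-y)). Qed.

Lemma exists_c : exists c, G c = q *: c /\ forall a, X a = c * a - G a * c.
Proof.
case: (eqVneq q 1) => [q1|qn1].
  exists (alpha *: 1); split.
    by rewrite GZ G1 q1 scale1r.
  move=> a; have := Xm a; rewrite (q1_m1 q1) /= => ->.
  by rewrite -scalerAl mul1r -scalerAr mulr1 scalerBr.
have [c0 hc0] := exists_c0.
pose d := G c0 - q *: c0.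
have hd : forall b, d * b = G b * d.
  move=> b; rewrite -[b]GGi; set a := Gi b.
  have e := GX a; rewrite !hc0 GB !GM in e.
  apply/eqP; rewrite -subr_eq0 /d mulrBl mulrBr -scalerAl -scalerAr sub4 e.
  by rewrite -scalerBr subrr.
have Gd : G d = d.
  case: (eqVneq d 0) => [->|dn0]; first by rewrite G0.
  have [u hu] : exists u, d * u = 1.
    by apply: (simple_rinv (F := Gi) Hs dn0) => s; rewrite hd GGi.
  apply/eqP; rewrite eq_sym -subr_eq0; apply/eqP.
  by rewrite -[d - G d]mulr1 -hu mulrA mulrBl -hd subrr mul0r.
have Gc0 : G c0 = q *: c0 + d by rewrite /d addrC subrK.
clearbody d.
have hq : q - 1 != 0 by rewrite subr_eq0.
exists (c0 + (q - 1)^-1 *: d); split.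
  rewrite GD GZ Gd.
  rewrite Gc0 scalerDr scalerA -addrA; congr (_ + _).
  rewrite -{1}[d]scale1r -scalerDl; congr (_ *: _).
  by field.
move=> a; rewrite mulrDl mulrDr -scalerAl -scalerAr hd.
by rewrite [G a * c0 + _]addrC opprD addrA addrK hc0.
Qed.


Lemma iterG a t k : G a = t *: a -> iter k G a = t ^+ k *: a.
Proof.
move=> Ga; elim: k => [|k IH]; first by rewrite expr0 scale1r.
by rewrite iterS IH GZ Ga scalerA exprSr.
Qed.

Lemma partI : exists c, G c = zeta ^+ (n %/ m) *: c /\
  (forall (i : nat) (a : A), G a = zeta ^+ i *: a ->
     X a = c * a - zeta ^+ i *: (a * c) /\
     c ^+ m * a - zeta ^+ (m * i) *: (a * c ^+ m)
       = (alpha * (1 - zeta ^+ (m * i))) *: a).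
Proof.
have [c [Gc hX]] := exists_c.
exists c; split; first by rewrite zq.
have Xy : forall y s, G y = s *: y -> X y = c * y - s *: (y * c).
  by move=> y s Gy; rewrite hX Gy -scalerAl.
move=> i a Ga; split; first exact: Xy.
set t := zeta ^+ i.
have XH : forall k j, (j <= k)%N ->
    X (c ^+ j * a * c ^+ (k - j)) =
    c * (c ^+ j * a * c ^+ (k - j)) - (t * q ^+ k) *: (c ^+ j * a * c ^+ (k - j) * c).
  move=> k j jk; apply: Xy.
  rewrite !GM !Gexp Gc Ga !exprZn -!scalerAl -!scalerAr !scalerA.
  rewrite -scalerAl scalerA -/t; congr (_ *: _); rewrite -{2}(subnKC jk) exprD; ring.
have := iterX_prim XL XH m_gt0 qp; rewrite Xm (iterG _ Ga) => e.
rewrite mulnC exprM -/t -e -scalerA scalerBl scale1r.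
by [].
Qed.

End PartI.

Section PartII.
Variables (K : fieldType) (A : algType K) (n m : nat) (q zeta alpha : K).
Hypotheses (m_gt0 : (0 < m)%N) (qp : m.-primitive_root q) (zp : n.-primitive_root zeta)
  (zq : zeta ^+ (n %/ m) = q).
Variables (Ai : nat -> A -> Prop) (c : A).
Hypothesis Hgr : Zn_grading n Ai.
Hypothesis Hc : Ai (n %/ m) c.
Hypothesis Hid : forall (i : nat) (a : A), Ai i a ->
  c ^+ m * a - zeta ^+ (m * i) *: (a * c ^+ m) = (alpha * (1 - zeta ^+ (m * i))) *: a.

Local Notation N := (n %/ m)%N.

Lemma n_gt0 : (0 < n)%N. Proof. exact: prim_order_gt0 zp. Qed.

Lemma Ai0 i : Ai i 0. Proof. by case: Hgr => /(_ i) []. Qed.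
Lemma AiL i k a b : Ai i a -> Ai i b -> Ai i (k *: a + b).
Proof. by case: Hgr => /(_ i) [] _ h _ _ _ _; exact: h. Qed.
Lemma AiD i a b : Ai i a -> Ai i b -> Ai i (a + b).
Proof. by move=> ha hb; rewrite -[a]scale1r; exact: AiL. Qed.
Lemma AiZ i k a : Ai i a -> Ai i (k *: a).
Proof. by move=> ha; rewrite -[k *: a]addr0; apply: AiL => //; exact: Ai0. Qed.
Lemma AiB i a b : Ai i a -> Ai i b -> Ai i (a - b).
Proof. by move=> ha hb; rewrite -scaleN1r addrC; apply: AiL. Qed.
Lemma Aimod i a : Ai i a <-> Ai (i %% n) a. Proof. by case: Hgr => _ h _ _ _; exact: h. Qed.
Lemma AiM i j a b : Ai i a -> Ai j b -> Ai (i + j) (a * b).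
Proof. by case: Hgr => _ _ _ _ h; exact: h. Qed.
Lemma Aieq i j a : i = j -> Ai i a -> Ai j a. Proof. by move=> ->. Qed.

Definition F (a : A) : 'I_n -> A := proj1_sig (cid (match Hgr with And5 _ _ h _ _ => h a end)).
Lemma FA a (i : 'I_n) : Ai i (F a i).
Proof. by rewrite /F; case: cid => f hf /=; exact: (proj1 hf i). Qed.
Lemma Fsum a : a = \sum_i F a i.
Proof. by rewrite /F; case: cid => f hf /=; exact: (proj2 hf). Qed.

Lemma Funiq a f : (forall i : 'I_n, Ai i (f i)) -> a = \sum_i f i -> forall i, F a i = f i.
Proof.
move=> hf ha; case: Hgr => _ _ _ hu _.
have := hu (fun i => F a i - f i); rewrite sumrB -Fsum -ha subrr => h i.
by apply/eqP; rewrite -subr_eq0; apply/eqP; apply: h => // j; apply: AiB => //; exact: FA.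
Qed.

Lemma FL k a b (i : 'I_n) : F (k *: a + b) i = k *: F a i + F b i.
Proof.
move: i; apply: Funiq; first by move=> i; apply: AiL; exact: FA.
by rewrite big_split /= -scaler_sumr -!Fsum.
Qed.

Lemma Fhom i a : Ai i a -> forall j : 'I_n, F a j = if (j == (i %% n)%N :> nat) then a else 0.
Proof.
move=> ha; apply: Funiq.
  move=> j; case: eqP => [->|_]; last exact: Ai0.
  exact: (proj1 (Aimod i a) ha).
pose j0 := Ordinal (div.ltn_pmod i n_gt0).
rewrite (bigD1 j0) //= eqxx big1 ?addr0 // => j /negbTE.
by rewrite -val_eqE /= => ->.
Qed.

Lemma ext (P Q : A -> A) :
  (forall u v, P (u + v) = P u + P v) -> (forall u v, Q (u + v) = Q u + Q v) ->
  (forall i y, Ai i y -> P y = Q y) -> forall a, P a = Q a.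
Proof.
move=> PD QD h a.
have P0 : P 0 = 0 by apply/eqP; rewrite -[P 0](addrK (P 0)) -PD addr0 subrr.
have Q0 : Q 0 = 0 by apply/eqP; rewrite -[Q 0](addrK (Q 0)) -QD addr0 subrr.
rewrite [a]Fsum (big_morph P PD P0) (big_morph Q QD Q0).
by apply: eq_bigr => i _; apply: (h (nat_of_ord i)); exact: FA.
Qed.

Definition Gd (a : A) : A := \sum_(i < n) zeta ^+ i *: F a i.
Definition Xd (a : A) : A := \sum_(i < n) (c * F a i - zeta ^+ i *: (F a i * c)).

Lemma Gd_hom i a : Ai i a -> Gd a = zeta ^+ i *: a.
Proof.
move=> ha; rewrite /Gd (eq_bigr (fun j : 'I_n => if (j == (i %% n)%N :> nat) then zeta ^+ i *: a else 0)).
  pose j0 := Ordinal (div.ltn_pmod i n_gt0).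
  rewrite (bigD1 j0) //= eqxx big1 ?addr0 // => j /negbTE.
  by rewrite -val_eqE /= => ->.
move=> j _; rewrite (Fhom ha); case: eqP => [->|_]; last by rewrite scaler0.
by rewrite prim_expr_mod.
Qed.

Lemma Xd_hom i a : Ai i a -> Xd a = c * a - zeta ^+ i *: (a * c).
Proof.
move=> ha; rewrite /Xd (eq_bigr (fun j : 'I_n => if (j == (i %% n)%N :> nat) then c * a - zeta ^+ i *: (a * c) else 0)).
  pose j0 := Ordinal (div.ltn_pmod i n_gt0).
  rewrite (bigD1 j0) //= eqxx big1 ?addr0 // => j /negbTE.
  by rewrite -val_eqE /= => ->.
move=> j _; rewrite (Fhom ha); case: eqP => [->|_]; last by rewrite mul0r mulr0 scaler0 subr0.
by rewrite prim_expr_mod.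
Qed.

Lemma GdL k a b : Gd (k *: a + b) = k *: Gd a + Gd b.
Proof.
rewrite /Gd scaler_sumr -big_split /=; apply: eq_bigr => i _.
by rewrite FL scalerDr !scalerA mulrC.
Qed.

Lemma XdL k a b : Xd (k *: a + b) = k *: Xd a + Xd b.
Proof.
rewrite /Xd scaler_sumr -big_split /=; apply: eq_bigr => i _.
rewrite FL mulrDr mulrDl scalerDr -scalerAr -scalerAl scalerBr !scalerA [k * _]mulrC.
by rewrite opprD addrACA.
Qed.


Lemma GdD u v : Gd (u + v) = Gd u + Gd v. Proof. exact: (XD GdL u v). Qed.
Lemma XdD u v : Xd (u + v) = Xd u + Xd v. Proof. exact: (@XD _ _ Xd XdL u v). Qed.
Lemma GdZ k u : Gd (k *: u) = k *: Gd u. Proof. exact: (@XZ _ _ Gd GdL k u). Qed.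
Lemma XdZ k u : Xd (k *: u) = k *: Xd u. Proof. exact: (@XZ _ _ Xd XdL k u). Qed.

Lemma iterD (P : A -> A) : (forall u v, P (u + v) = P u + P v) ->
  forall k u v, iter k P (u + v) = iter k P u + iter k P v.
Proof. by move=> PD; elim=> [|k IH] u v //=; rewrite IH PD. Qed.

Lemma Ai_cl s p y : Ai s y -> Ai (p * N + s) (c ^+ p * y).
Proof.
move=> hy; elim: p => [|p IH]; first by rewrite expr0 mul1r.
rewrite exprS -mulrA; apply: Aieq (AiM Hc IH).
by rewrite mulSn addnA.
Qed.

Lemma Ai_cr s p y : Ai s y -> Ai (s + p * N) (y * c ^+ p).
Proof.
move=> hy; elim: p => [|p IH]; first by rewrite expr0 mulr1 addn0.
rewrite exprSr mulrA; apply: Aieq (AiM IH Hc).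
by rewrite mulSnr addnA.
Qed.

Lemma iterGd i a k : Ai i a -> iter k Gd a = (zeta ^+ i) ^+ k *: a.
Proof.
move=> ha; elim: k => [|k IH]; first by rewrite expr0 scale1r.
by rewrite iterS IH GdZ (Gd_hom ha) scalerA exprSr.
Qed.

Lemma Xd_iter i a : Ai i a -> iter m Xd a = c ^+ m * a - (zeta ^+ i) ^+ m *: (a * c ^+ m).
Proof.
move=> ha; apply: (iterX_prim XdL _ m_gt0 qp) => k j jk.
have hy : Ai (i + k * N) (c ^+ j * a * c ^+ (k - j)).
  apply: Aieq (Ai_cr (k - j) (Ai_cl j ha)).
  by rewrite addnC addnA -mulnDl subnK // addnC.
rewrite (Xd_hom hy) exprD mulnC exprM zq.
by [].
Qed.

Lemma Gd_mul a b : Gd (a * b) = Gd a * Gd b.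
Proof.
move: a; apply: ext.
- by move=> u v; rewrite mulrDl GdD.
- by move=> u v; rewrite GdD mulrDl.
move=> i a ha; move: b; apply: ext.
- by move=> u v; rewrite mulrDr GdD.
- by move=> u v; rewrite GdD mulrDr.
move=> j b hb.
rewrite (Gd_hom (AiM ha hb)) (Gd_hom ha) (Gd_hom hb) -scalerAl -scalerAr scalerA exprD.
by [].
Qed.

Lemma Xd_mul a b : Xd (a * b) = Xd a * b + Gd a * Xd b.
Proof.
move: a; apply: ext.
- by move=> u v; rewrite mulrDl XdD.
- by move=> u v; rewrite XdD GdD !mulrDl addrACA.
move=> i a ha; move: b; apply: ext.
- by move=> u v; rewrite mulrDr XdD.
- by move=> u v; rewrite XdD mulrDr mulrDr addrACA.
move=> j b hb.
rewrite (Xd_hom (AiM ha hb)) (Xd_hom ha) (Xd_hom hb) (Gd_hom ha).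
rewrite mulrBl mulrBr -!scalerAl -!scalerAr !mulrA scalerA -exprD addrA.
by rewrite subrK.
Qed.


Lemma partII :
  let formulas (G X : A -> A) :=
    forall (i : nat) (a : A), Ai i a ->
      G a = zeta ^+ i *: a /\ X a = c * a - zeta ^+ i *: (a * c) in
  exists G X : A -> A,
    [/\ Taft_module n m q alpha G X, formulas G X,
        Taft_module_algebra n m q alpha G X
      & forall G' X' : A -> A, Taft_module n m q alpha G' X' ->
          formulas G' X' -> (forall a, G' a = G a /\ X' a = X a)].
Proof.
move=> formulas; exists Gd, Xd.
have itern : forall a, iter n Gd a = a.
  apply: (ext (P := iter n Gd) (Q := id)); first exact: (iterD GdD n).
    by [].
  move=> i y hy; rewrite (iterGd _ hy) -exprM mulnC exprM (prim_expr_order zp).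
  by rewrite expr1n scale1r.

have TM : Taft_module n m q alpha Gd Xd.
  split.
  - exact: GdL.
  - exact: XdL.
  - apply: (ext (P := iter m Xd) (Q := fun a => alpha *: (a - iter m Gd a))).
    + exact: (iterD XdD m).
    + by move=> u v; rewrite (iterD GdD) opprD addrACA scalerDr.
    move=> i y hy; rewrite (Xd_iter hy) (iterGd _ hy) -exprM [(i * m)%N]mulnC Hid //.
    by rewrite -scalerA scalerBl scale1r scalerBr.
  - exact: itern.
  - apply: (ext (P := fun a => Gd (Xd a)) (Q := fun a => q *: Xd (Gd a))).
    + by move=> u v; rewrite XdD GdD.
    + by move=> u v; rewrite GdD XdD scalerDr.
    move=> i y hy.
    have hx : Ai (i + N) (Xd y).
      rewrite (Xd_hom hy); apply: AiB; last by apply: AiZ; exact: AiM.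
      by rewrite addnC; exact: AiM.
    rewrite (Gd_hom hx) (Gd_hom hy) XdZ exprD zq scalerA mulrC.
    by [].
have G1 : Gd 1 = 1.
  pose y := iter n.-1 Gd 1.
  have Gy : Gd y = 1 by rewrite /y -iterS prednK ?itern // n_gt0.
  by rewrite -[Gd 1]mul1r -{1}Gy -Gd_mul mulr1.
have X1 : Xd 1 = 0.
  have e : Xd 1 = Xd 1 + Xd 1 by rewrite -{1}[1]mulr1 Xd_mul G1 mulr1 mul1r.
  by apply: (@addrI _ (Xd 1)); rewrite addr0 -e.
split=> //.
- by move=> i a ha; split; [exact: Gd_hom | exact: Xd_hom].
- by split=> //; [exact: Gd_mul | exact: Xd_mul].
move=> G' X' [G'L X'L _ _ _] hf a; split.
  apply: (ext (P := G') (Q := Gd)) => //; first exact: XD G'L.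
    exact: GdD.
  by move=> i y hy; rewrite (Gd_hom hy); case: (hf i y hy).
apply: (ext (P := X') (Q := Xd)) => //; first exact: XD X'L.
  exact: XdD.
by move=> i y hy; rewrite (Xd_hom hy); case: (hf i y hy).
Qed.

End PartII.

Theorem theorem3p1 (R : realType) (n m : nat) (q zeta alpha : R[i])
  (m_gt0 : (0 < m)%N) (m_dvd_n : (m %| n)%N)
  (q_prim : m.-primitive_root q) (zeta_prim : n.-primitive_root zeta)
  (zeta_q : zeta ^+ (n %/ m) = q) :
  (* (i) *)
  (forall (A : algType R[i]) (G X : A -> A),
     central_simple A -> Taft_module_algebra n m q alpha G X ->
     exists c : A,
       G c = zeta ^+ (n %/ m) *: c /\
       (forall (i : nat) (a : A), G a = zeta ^+ i *: a ->
          X a = c * a - zeta ^+ i *: (a * c) /\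
          c ^+ m * a - zeta ^+ (m * i) *: (a * c ^+ m)
            = (alpha * (1 - zeta ^+ (m * i))) *: a))
  /\
  (* (ii) *)
  (forall (A : algType R[i]) (Ai : nat -> A -> Prop) (c : A),
     Zn_grading n Ai -> central_simple A -> division_alg A ->
     Ai (n %/ m)%N c ->
     (forall (i : nat) (a : A), Ai i a ->
        c ^+ m * a - zeta ^+ (m * i) *: (a * c ^+ m)
          = (alpha * (1 - zeta ^+ (m * i))) *: a) ->
     let formulas (G X : A -> A) :=
       forall (i : nat) (a : A), Ai i a ->
         G a = zeta ^+ i *: a /\ X a = c * a - zeta ^+ i *: (a * c) in
     exists G X : A -> A,
       [/\ Taft_module n m q alpha G X, formulas G X,
           Taft_module_algebra n m q alpha G X
         & forall G' X' : A -> A, Taft_module n m q alpha G' X' ->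
             formulas G' X' -> (forall a, G' a = G a /\ X' a = X a)]).
Proof.
split.
  move=> A G X Hcs HT.
  exact: (partI m_gt0 q_prim zeta_prim zeta_q HT Hcs).
move=> A Ai c Hgr Hcs Hdiv Hc Hid.
exact: (partII m_gt0 q_prim zeta_prim zeta_q Hgr Hc Hid).
Qed.
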